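(* Let $G$ be a graph containing a $2$-factor, and let $F$ be a $2$-factor of $G$ whose number of components is minimum among all $2$-factors of $G$. Let $x\in V(G)$ be such that there exists a $2$-factor $F'$ of $G-x$ with $\omega(F')<\omega(F)$ (such $x$ is called co-absorbable). Then $d_G(x)\le \alpha(G)-1$.
   Context: All graphs are finite, simple and undirected. A $2$-factor of a graph is a spanning subgraph in which every vertex has degree $2$ (equivalently, every component is a cycle). $\omega(H)$ denotes the number of connected components of $H$, $d_G(x)$ the degree of $x$ in $G$, and $\alpha(G)$ the independence number of $G$. *)

(* Defs.v *)
From mathcomp Require Import all_boot.
Set Implicit Arguments. Unset Strict Implicit. Unset Printing Implicit Defensive.

Definition simple_graph (T : finType) (e : rel T) : Prop :=
  symmetric e /\ irreflexive e.

Definition deg (T : finType) (e : rel T) (x : T) : nat := #|[set y | e x y]|.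

Definition restr (T : finType) (D : {set T}) (f : rel T) : rel T :=
  fun a b => [&& a \in D, b \in D & f a b].

Definition ncomp (T : finType) (D : {set T}) (f : rel T) : nat :=
  #|[set [set y in D | connect (restr D f) v y] | v in D]|.

Definition two_factor_on (T : finType) (e : rel T) (D : {set T}) (f : rel T) : Prop :=
  [/\ symmetric f,
      (forall a b, f a b -> [&& a \in D, b \in D & e a b]) &
      (forall v, v \in D -> deg f v = 2)].

Definition two_factor (T : finType) (e : rel T) (f : rel T) : Prop :=
  two_factor_on e [set: T] f.

Definition independent (T : finType) (e : rel T) (S : {set T}) : bool :=
  [forall x in S, forall y in S, ~~ e x y].

Definition alpha (T : finType) (e : rel T) : nat :=
  \max_(S : {set T} | independent e S) #|S|.

(* Main.v *)
Require Import Defs.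
From mathcomp Require Import all_boot zify.
Set Implicit Arguments. Unset Strict Implicit. Unset Printing Implicit Defensive.

Section Aux.
Variable T : finType.
Implicit Types (f F Rm Ad : rel T) (D : {set T}).

Definition edge (p q : T) : rel T :=
  fun u v => ((u == p) && (v == q)) || ((u == q) && (v == p)).
Definition modr F Rm Ad : rel T := fun u v => (F u v && ~~ Rm u v) || Ad u v.

Lemma edge_sym p q : symmetric (edge p q).
Proof. by move=> u v; rewrite /edge; case: (u == p); case: (u == q); case: (v == p); case: (v == q). Qed.

Lemma modr_sym F Rm Ad : symmetric F -> symmetric Rm -> symmetric Ad ->
  symmetric (modr F Rm Ad).
Proof. by move=> h1 h2 h3 u v; rewrite /modr h1 h2 h3. Qed.

Lemma deg_mod F Rm Ad v :
  (forall w, Rm v w -> F v w) -> (forall w, Ad v w -> ~~ F v w) ->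
  deg (modr F Rm Ad) v = deg F v - #|[set w | Rm v w]| + #|[set w | Ad v w]|.
Proof.
move=> HR HA; rewrite /deg.
have -> : [set w | modr F Rm Ad v w] =
   ([set w | F v w] :\: [set w | Rm v w]) :|: [set w | Ad v w].
  by apply/setP=> w; rewrite !inE /modr andbC.
rewrite cardsU.
have -> : ([set w | F v w] :\: [set w | Rm v w]) :&: [set w | Ad v w] = set0.
  apply/setP=> w; rewrite !inE; case A: (Ad v w); rewrite ?andbF //.
  by rewrite (negbTE (HA _ A)) andbF.
rewrite cards0 subn0 cardsD.
suff -> : [set w | F v w] :&: [set w | Rm v w] = [set w | Rm v w] by [].
by apply/setIidPr/subsetP => w; rewrite !inE => /HR.
Qed.

Lemma nbr2 f v p q w : deg f v = 2 -> f v p -> f v q -> p != q -> f v w ->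
  w = p \/ w = q.
Proof.
move=> d fp fq pq fw.
have E : [set p; q] = [set y | f v y].
  apply/eqP; rewrite eqEcard cards2 pq -/(deg f v) d andbT.
  by rewrite subUset !sub1set !inE fp fq.
have : w \in [set p; q] by rewrite E inE.
by rewrite !inE => /orP [] /eqP ->; [left|right].
Qed.

Lemma deg2P f v : deg f v = 2 -> exists b c, [/\ b != c, f v b, f v c &
   forall w, f v w -> w = b \/ w = c].
Proof.
move=> d; have /cards2P [b [c [bc E]]] : #|[set w | f v w]| == 2 by rewrite -/(deg f v) d.
have : b \in [set w | f v w] by rewrite E !inE eqxx.
rewrite inE => fb.
have : c \in [set w | f v w] by rewrite E !inE eqxx orbT.
rewrite inE => fc.
exists b, c; split=> // w fw; exact: nbr2 d fb fc bc fw.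
Qed.

Lemma ncomp_le D F2 F1 :
  symmetric F2 ->
  (forall u v, u \in D -> v \in D -> F1 u v -> connect F2 u v) ->
  (forall u, exists2 v, v \in D & connect F2 u v) ->
  ncomp [set: T] F2 <= ncomp D F1.
Proof.
move=> s2 H1 H2; rewrite /ncomp.
have HR : restr [set: T] F2 =2 F2 by move=> u v; rewrite /restr !inE.
set C2 := fun v => [set y in [set: T] | connect (restr [set: T] F2) v y].
set C1 := fun v => [set y in D | connect (restr D F1) v y].
pose g := fun C : {set T} => if [pick y in C] is Some y then C2 y else set0.
have sub : [set C2 v | v in [set: T]] \subset g @: [set C1 v | v in D].
  apply/subsetP => C /imsetP [v _ ->].
  case: (H2 v) => y yD cvy.
  apply/imsetP; exists (C1 y); first by apply/imsetP; exists y.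
  rewrite /g; case: pickP => [z|].
    rewrite /C1 inE => /andP [zD cyz].
    have cyz' : connect F2 y z.
      apply: (connect_sub _ cyz) => a b; rewrite /restr => /and3P [aD bD ab].
      exact: H1.
    have cvz := connect_trans cvy cyz'.
    apply/setP => w; rewrite /C2 !inE !(eq_connect HR).
    apply/idP/idP => h.
      by apply: connect_trans h; rewrite (sym_connect_sym s2).
    exact: connect_trans cvz h.
  by move/(_ y); rewrite /C1 inE yD connect0.
exact: leq_trans (subset_leq_card sub) (leq_imset_card _ _).
Qed.

End Aux.

Section Orient.
Variable T : finType.
Implicit Types (f : rel T) (D : {set T}).

Definition ospec D f (s : T -> T) :=
  [/\ forall a, a \in D -> s a \in D,
      forall a, a \in D -> f a (s a),
      forall a, a \in D -> s (s a) != a,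
      {in D &, injective s} &
      forall u v, f u v -> v = s u \/ u = s v].

Lemma step_path D f f' s' a b c :
  symmetric f -> (forall u v, f u v -> u \in D) ->
  a \in D -> f a b -> f a c -> (forall w, f a w -> w = b \/ w = c) ->
  b != c -> a != b -> a != c -> ~~ f b c ->
  (forall u v, u != a -> v != a -> f u v -> f' u v) ->
  (forall u v, f' u v -> f u v \/ (u = b /\ v = c) \/ (u = c /\ v = b)) ->
  ospec (D :\ a) f' s' -> s' b = c -> exists s, ospec D f s.
Proof.
move=> fs fD aD fab fac Na bc ab ac nbc H1 H2 [sD sF ss sinj sall] sb.
have bD : b \in D by apply: (fD b a); rewrite fs.
have cD : c \in D by apply: (fD c a); rewrite fs.
have ba : (b == a) = false by rewrite eq_sym (negbTE ab).
have ca : (c == a) = false by rewrite eq_sym (negbTE ac).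
have cb : (c == b) = false by rewrite eq_sym (negbTE bc).
have D'E : forall v, v \in D -> v != a -> v \in D :\ a by move=> v vD va; rewrite !inE va.
have b' : b \in D :\ a by rewrite D'E // ba.
have c' : c \in D :\ a by rewrite D'E // ca.
have s'a : forall v, v \in D :\ a -> s' v != a.
  by move=> v /sD; rewrite !inE => /andP [].
pose s := fun v => if v == b then a else if v == a then c else s' v.
have sbE : s b = a by rewrite /s eqxx.
have saE : s a = c by rewrite /s (negbTE ab) eqxx.
have soE : forall v, v != a -> v != b -> s v = s' v.
  by move=> v va vb; rewrite /s (negbTE va) (negbTE vb).
exists s; split.
- move=> v vD; case: (eqVneq v b) => [->|vb]; first by rewrite sbE.
  case: (eqVneq v a) => [->|va]; first by rewrite saE.
  by rewrite soE //; have := sD v (D'E v vD va); rewrite !inE => /andP [].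
- move=> v vD; case: (eqVneq v b) => [->|vb]; first by rewrite sbE fs.
  case: (eqVneq v a) => [->|va]; first by rewrite saE.
  rewrite soE //; have v' := D'E v vD va.
  case: (H2 _ _ (sF v v')) => [//|[[E _]|[E1 E2]]]; first by rewrite E eqxx in vb.
  by have := ss b b'; rewrite sb -E2 E1 eqxx.
- move=> v vD; case: (eqVneq v b) => [->|vb]; first by rewrite sbE saE cb.
  case: (eqVneq v a) => [->|va]; first by rewrite saE soE ?cb ?ca // (s'a c c').
  have v' := D'E v vD va.
  rewrite (soE v va vb).
  case: (eqVneq (s' v) b) => [->|wb]; first by rewrite sbE eq_sym.
  by rewrite soE ?(s'a v v') // ss.
- move=> u v uD vD /=.
  case: (eqVneq u b) => [->|ub]; case: (eqVneq v b) => [->|vb] //.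
  + rewrite sbE; case: (eqVneq v a) => [->|va]; first by rewrite saE => E; rewrite E eqxx in ac.
    by rewrite soE // => E; have := s'a v (D'E v vD va); rewrite -E eqxx.
  + rewrite sbE; case: (eqVneq u a) => [->|ua]; first by rewrite saE => E; rewrite E eqxx in ac.
    by rewrite soE // => E; have := s'a u (D'E u uD ua); rewrite E eqxx.
  case: (eqVneq u a) => [->|ua]; case: (eqVneq v a) => [->|va] //.
  + rewrite saE soE // => E; have: s' b = s' v by rewrite sb.
    by move/(sinj _ _ b' (D'E v vD va)) => E'; rewrite E' eqxx in vb.
  + rewrite saE soE // => E; have: s' u = s' b by rewrite sb.
    by move/(sinj _ _ (D'E u uD ua) b') => E'; rewrite E' eqxx in ub.
  + by rewrite !soE //; apply: sinj; apply: D'E.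
- move=> u v fuv.
  case: (eqVneq u a) => [Eu|ua].
    subst u; case: (Na v fuv) => ->; [right; rewrite sbE // | left; rewrite saE //].
  case: (eqVneq v a) => [Ev|va].
    subst v; rewrite fs in fuv.
    by case: (Na u fuv) => ->; [left; rewrite sbE | right; rewrite saE].
  case: (sall u v (H1 u v ua va fuv)) => E.
    left; case: (eqVneq u b) => [Eb|ub]; first by rewrite Eb sb in E; move: fuv; rewrite Eb E (negbTE nbc).
    by rewrite soE.
  right; case: (eqVneq v b) => [Eb|vb]; first by rewrite Eb sb in E; move: fuv; rewrite Eb E fs (negbTE nbc).
  by rewrite soE.
Qed.

Lemma step_tri D f s' a b c :
  symmetric f -> (forall u v, f u v -> u \in D) -> a \in D ->
  (forall w, f a w -> w = b \/ w = c) -> (forall w, f b w -> w = a \/ w = c) ->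
  (forall w, f c w -> w = a \/ w = b) ->
  f a b -> f b c -> f c a -> a != b -> b != c -> a != c ->
  ospec (D :\: [set a; b; c]) (fun u v => f u v && (u \in D :\: [set a; b; c])) s' ->
  exists s, ospec D f s.
Proof.
move=> fs fD aD Na Nb Nc fab fbc fca ab bc ac [sD sF ss sinj sall].
have bD : b \in D by apply: (fD b c).
have cD : c \in D by apply: (fD c a).
have ba : (b == a) = false by rewrite eq_sym (negbTE ab).
have ca : (c == a) = false by rewrite eq_sym (negbTE ac).
have cb : (c == b) = false by rewrite eq_sym (negbTE bc).
set D' := D :\: [set a; b; c].
have D'E : forall v, v \in D -> v != a -> v != b -> v != c -> v \in D'.
  by move=> v vD va vb vc; rewrite !inE (negbTE va) (negbTE vb) (negbTE vc).
have s'n : forall v, v \in D' -> [/\ s' v != a, s' v != b, s' v != c & s' v \in D].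
  move=> v /sD; rewrite !inE => /andP [h h4]; move: h; rewrite !negb_or => /andP [/andP [h1 h2] h3].
  by split.
pose s := fun v => if v == a then b else if v == b then c else if v == c then a else s' v.
have saE : s a = b by rewrite /s eqxx.
have sbE : s b = c by rewrite /s ba eqxx.
have scE : s c = a by rewrite /s ca cb eqxx.
have soE : forall v, v != a -> v != b -> v != c -> s v = s' v.
  by move=> v va vb vc; rewrite /s (negbTE va) (negbTE vb) (negbTE vc).
have tri : forall v, v \in D -> (v = a \/ v = b \/ v = c) \/ [/\ v != a, v != b, v != c & v \in D'].
  move=> v vD; case: (eqVneq v a) => [->|va]; first by left; left.
  case: (eqVneq v b) => [->|vb]; first by left; right; left.
  case: (eqVneq v c) => [->|vc]; first by left; right; right.
  by right; split => //; apply: D'E.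
exists s; split.
- move=> v vD; case: (tri v vD) => [[->|[->|->]]|[va vb vc v']]; rewrite ?saE ?sbE ?scE //.
  by rewrite soE //; case: (s'n v v').
- move=> v vD; case: (tri v vD) => [[->|[->|->]]|[va vb vc v']]; rewrite ?saE ?sbE ?scE //.
  by rewrite soE //; have /andP [] := sF v v'.
- move=> v vD; case: (tri v vD) => [[->|[->|->]]|[va vb vc v']];
    rewrite ?saE ?sbE ?scE ?saE ?sbE ?ca ?ab ?cb ?ba //.
  case: (s'n v v') => w1 w2 w3 _.
  by rewrite soE // soE // ss.
- move=> u v uD vD.
  have ab' : (a == b) = false by apply: negbTE.
  have ac' : (a == c) = false by apply: negbTE.
  have bc' : (b == c) = false by apply: negbTE.
  case: (tri u uD) => [Tu|[ua ub uc u']]; case: (tri v vD) => [Tv|[va vb vc v']].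
  + by move: Tu Tv => [->|[->|->]] [->|[->|->]]; rewrite ?saE ?sbE ?scE // => /eqP;
      rewrite ?ab' ?ac' ?bc' ?ba ?ca ?cb.
  + rewrite (soE v) //; case: (s'n v v') => h1 h2 h3 _.
    by move: Tu => [->|[->|->]]; rewrite ?saE ?sbE ?scE => E; move: h1 h2 h3; rewrite -E eqxx.
  + rewrite (soE u) //; case: (s'n u u') => h1 h2 h3 _.
    by move: Tv => [->|[->|->]]; rewrite ?saE ?sbE ?scE => E; move: h1 h2 h3; rewrite E eqxx.
  rewrite !soE //; exact: sinj.
- move=> u v fuv.
  have uD := fD u v fuv.
  have vD : v \in D by apply: (fD v u); rewrite fs.
  case: (tri u uD) => [[Eu|[Eu|Eu]]|[ua ub uc u']].
  + by subst u; case: (Na v fuv) => ->; [left; rewrite saE | right; rewrite scE].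
  + by subst u; case: (Nb v fuv) => ->; [right; rewrite saE | left; rewrite sbE].
  + by subst u; case: (Nc v fuv) => ->; [left; rewrite scE | right; rewrite sbE].
  case: (tri v vD) => [[Ev|[Ev|Ev]]|[va vb vc v']].
  + by subst v; rewrite fs in fuv; case: (Na u fuv) => E; rewrite E eqxx in ub uc.
  + by subst v; rewrite fs in fuv; case: (Nb u fuv) => E; rewrite E eqxx in ua uc.
  + by subst v; rewrite fs in fuv; case: (Nc u fuv) => E; rewrite E eqxx in ua ub.
  rewrite !soE //; apply: sall; by rewrite fuv u'.
Qed.

Lemma orient n : forall D f, #|D| <= n -> symmetric f -> irreflexive f ->
  (forall u v, f u v -> u \in D) -> (forall v, v \in D -> deg f v = 2) ->
  exists s, ospec D f s.
Proof.
elim: n => [|n IH] D f.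
  move=> D0 fs fi fD _; exists id.
  have E : forall v, v \in D = false.
    by move=> v; apply/negP => vD; move: D0; rewrite (cardD1 v) vD.
  by split=> //; try (by move=> v; rewrite E); move=> u v /fD; rewrite E.
move=> Dn fs fi fD fdeg.
case: (set_0Vmem D) => [D0|[a aD]].
  apply: (IH D f) => //; by rewrite D0 cards0.
have [b [c [bc fab fac Na]]] := deg2P (fdeg a aD).
have ab : a != b by apply: contraTneq fab => <-; rewrite fi.
have ac : a != c by apply: contraTneq fac => <-; rewrite fi.
have bD : b \in D by apply: (fD b a); rewrite fs.
have cD : c \in D by apply: (fD c a); rewrite fs.
have ba : (b == a) = false by rewrite eq_sym (negbTE ab).
have ca : (c == a) = false by rewrite eq_sym (negbTE ac).
have cb : (c == b) = false by rewrite eq_sym (negbTE bc).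
have bc' : (b == c) = false := negbTE bc.
have ab' : (a == b) = false := negbTE ab.
have ac' : (a == c) = false := negbTE ac.
case fbc: (f b c).
- have Nb : forall w, f b w -> w = a \/ w = c.
    by move=> w; apply: nbr2 (fdeg b bD) _ fbc _ => //; rewrite fs.
  have Nc : forall w, f c w -> w = a \/ w = b.
    by move=> w; apply: nbr2 (fdeg c cD) _ _ _ => //; rewrite fs.
  set D' := D :\: [set a; b; c].
  have clo : forall u v, f u v -> (u \in [set a; b; c]) = (v \in [set a; b; c]).
    have h : forall u v, f u v -> u \in [set a; b; c] -> v \in [set a; b; c].
      move=> u v fuv; rewrite !inE => /orP [/orP [] | ] /eqP E; subst u.
      + by case: (Na v fuv) => ->; rewrite eqxx ?orbT.
      + by case: (Nb v fuv) => ->; rewrite eqxx ?orbT.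
      + by case: (Nc v fuv) => ->; rewrite eqxx ?orbT.
    move=> u v fuv; apply/idP/idP; first exact: h.
    by apply: h; rewrite fs.
  suff [s' os'] : exists s', ospec D' (fun u v => f u v && (u \in D')) s'.
    by apply: (step_tri fs fD aD Na Nb Nc fab fbc _ ab bc ac os'); rewrite fs.
  apply: IH.
  - have : #|D'| < #|D|.
      apply: proper_card; apply/properP; split; first exact: subsetDl.
      by exists a => //; rewrite !inE eqxx.
    move=> h; rewrite -ltnS; exact: leq_trans h Dn.
  - move=> u v /=; rewrite fs; case fvu: (f v u) => //=.
    rewrite /D' !inE; have := clo u v (etrans (fs u v) fvu); rewrite !inE => ->.
    by rewrite (fD v u fvu) (fD u v) // fs.
  - by move=> u; rewrite fi.
  - by move=> u v /andP [].
  - move=> v vD'; rewrite -(fdeg v); last by move: vD'; rewrite inE => /andP [].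
    by rewrite /deg; apply: eq_card => w; rewrite [in LHS]inE [in RHS]inE vD' andbT.
- pose f' := modr f (fun u v => edge a b u v || edge a c u v) (edge b c).
  have H1 : forall u v, u != a -> v != a -> f u v -> f' u v.
    by move=> u v ua va fuv; rewrite /f' /modr /edge fuv (negbTE ua) (negbTE va) /= ?andbF.
  have H2 : forall u v, f' u v -> f u v \/ (u = b /\ v = c) \/ (u = c /\ v = b).
    move=> u v; rewrite /f' /modr => /orP [/andP [-> _]|]; first by left.
    by rewrite /edge => /orP [] /andP [/eqP -> /eqP ->]; right; [left|right].
  have f's : symmetric f'.
    apply: modr_sym => //; last exact: edge_sym.
    by move=> u v; rewrite edge_sym (edge_sym a c).
  have f'i : irreflexive f'.
    move=> u; rewrite /f' /modr fi /= /edge.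
    by case: (eqVneq u b) => [->|ub]; rewrite ?bc' ?cb ?eqxx /= ?andbF /= ?(negbTE ub) ?andbF.
  have f'D : forall u v, f' u v -> u \in D :\ a.
    move=> u v; rewrite /f' /modr => /orP [/andP [fuv]|].
      case: (eqVneq u a) => [Eu|ua]; last by rewrite !inE ua (fD u v fuv).
      subst u; by case: (Na v fuv) => ->; rewrite /edge !eqxx ?orbT.
    by rewrite /edge => /orP [] /andP [/eqP -> _]; rewrite !inE ?ba ?ca.
  have f'deg : forall v, v \in D :\ a -> deg f' v = 2.
    move=> v; rewrite !inE => /andP [va vD].
    have fva : forall w, f v w -> w == a -> (v == b) || (v == c).
      by move=> w fvw /eqP E; subst w; rewrite fs in fvw; case: (Na v fvw) => ->; rewrite eqxx ?orbT.
    rewrite /f' deg_mod.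
    + case: (eqVneq v b) => [Ev|vb].
        subst v.
        have -> : [set w | edge a b b w || edge a c b w] = [set a].
          by apply/setP => w; rewrite !inE /edge ?ba ?ca ?cb ?bc' ?ab' ?ac' ?eqxx /= ?andbF ?orbF.
        have -> : [set w | edge b c b w] = [set c].
          by apply/setP => w; rewrite !inE /edge ?ba ?ca ?cb ?bc' ?ab' ?ac' ?eqxx /= ?andbF ?orbF.
        by rewrite !cards1 (fdeg b bD).
      case: (eqVneq v c) => [Ev|vc].
        subst v.
        have -> : [set w | edge a b c w || edge a c c w] = [set a].
          by apply/setP => w; rewrite !inE /edge ?ba ?ca ?cb ?bc' ?ab' ?ac' ?eqxx /= ?andbF ?orbF.
        have -> : [set w | edge b c c w] = [set b].
          by apply/setP => w; rewrite !inE /edge ?ba ?ca ?cb ?bc' ?ab' ?ac' ?eqxx /= ?andbF ?orbF.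
        by rewrite !cards1 (fdeg c cD).
      have -> : [set w | edge a b v w || edge a c v w] = set0.
        by apply/setP => w; rewrite !inE /edge (negbTE va) (negbTE vb) (negbTE vc).
      have -> : [set w | edge b c v w] = set0.
        by apply/setP => w; rewrite !inE /edge (negbTE vb) (negbTE vc).
      by rewrite !cards0 (fdeg v vD).
    + move=> w; rewrite /edge (negbTE va) /= => /orP [] /andP [/eqP E /eqP ->]; subst v.
      * by rewrite fs.
      * by rewrite fs.
    + move=> w; rewrite /edge => /orP [] /andP [/eqP E /eqP ->]; subst v.
      * by rewrite fbc.
      * by rewrite fs fbc.
  have [s' os'] : exists s', ospec (D :\ a) f' s'.
    apply: IH => //.
    move: Dn; rewrite (cardD1 a) aD /= add1n ltnS.
    by rewrite (_ : #|[predD1 D & a]| = #|D :\ a|) // ; apply: eq_card => w; rewrite !inE.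
  have f'bc : f' b c by rewrite /f' /modr /edge !eqxx orbT.
  case: os' => [sD sF ss sinj sall].
  case: (sall b c f'bc) => E.
  + apply: (step_path fs fD aD fab fac Na bc ab ac _ H1 H2 _ (esym E)); first by rewrite fbc.
    by split.
  + apply: (step_path fs fD aD fac fab _ _ ac ab _ H1 _ _ (esym E)).
    * by move=> w /Na [] ->; [right|left].
    * by rewrite eq_sym.
    * by rewrite fs fbc.
    * by move=> u v /H2 [|[]]; [left|right;right|right;left].
    * by split.
Qed.

End Orient.

Theorem lemma11 (T : finType) (e : rel T) (F : rel T) (x : T) :
  simple_graph e ->
  two_factor e F ->
  (forall F2 : rel T, two_factor e F2 -> ncomp [set: T] F <= ncomp [set: T] F2) ->
  (exists F' : rel T, two_factor_on e [set~ x] F' /\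
      ncomp [set~ x] F' < ncomp [set: T] F) ->
  deg e x <= alpha e - 1.
Proof.
move=> [esym eirr] HF Hmin [F' [[F's F'e F'deg] Hlt]].
set D := [set~ x].
have F'i : irreflexive F'.
  by move=> a; apply/negP => /F'e /and3P [_ _]; rewrite eirr.
have F'D : forall u v, F' u v -> u \in D by move=> u v /F'e /and3P [].
have F'D2 : forall u v, F' u v -> v \in D by move=> u v /F'e /and3P [].
have xD : x \notin D by rewrite !inE eqxx.
have nx : forall w, ~~ F' x w by move=> w; apply/negP => /F'D; rewrite (negbTE xD).
have nx2 : forall w, ~~ F' w x by move=> w; apply/negP => /F'D2; rewrite (negbTE xD).
have [s [sD sF ss sinj sall]] := orient (leqnn #|D|) F's F'i F'D F'deg.
have nbD : forall y, e x y -> y \in D.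
  by move=> y exy; rewrite !inE; apply: contraTneq exy => ->; rewrite eirr.
have contra : forall F2, two_factor e F2 -> (forall u v, F' u v -> connect F2 u v) ->
    (exists y, F2 x y) -> False.
  move=> F2 tf H1 [y xy].
  have s2 : symmetric F2 by case: tf.
  have yD : y \in D by case: tf => _ h _; move/h: xy => /and3P [_ _ /nbD].
  have H2 : forall u, exists2 v, v \in D & connect F2 u v.
    move=> u; case: (eqVneq u x) => [->|ux]; first by exists y => //; apply: connect1.
    by exists u; rewrite ?inE ?connect0.
  have := ncomp_le s2 (fun u v _ _ h => H1 u v h) H2.
  have := Hmin F2 tf.
  move: Hlt; rewrite -/D; lia.
have claim1 : forall y, e x y -> ~~ e x (s y).
  move=> y exy; apply/negP => exz.
  have yD := nbD y exy.
  set z := s y.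
  have zD : z \in D := sD y yD.
  have Fyz : F' y z := sF y yD.
  have yz : y != z by apply: contraTneq Fyz => <-; rewrite F'i.
  have xy : x != y by apply: contraTneq yD => <-.
  have xz : x != z by apply: contraTneq zD => <-.
  have yz' := negbTE yz; have xy' := negbTE xy; have xz' := negbTE xz.
  have zy' : (z == y) = false by rewrite eq_sym.
  have yx' : (y == x) = false by rewrite eq_sym.
  have zx' : (z == x) = false by rewrite eq_sym.
  pose F2 := modr F' (edge y z) (fun u v => edge x y u v || edge x z u v).
  have F2yx : F2 y x by rewrite /F2 /modr /edge !eqxx ?andbT ?orbT.
  have F2xz : F2 x z by rewrite /F2 /modr /edge !eqxx ?andbT ?orbT.
  have F2s : symmetric F2.
    apply: modr_sym => //; first exact: edge_sym.
    by move=> u v; rewrite edge_sym (edge_sym x z).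
  apply: (contra F2).
  - split => //.
    + move=> u v H; rewrite !inE /=; move: H; rewrite /F2 /modr => /orP [/andP [/F'e /and3P [_ _ //] _]|].
      by rewrite /edge => /orP [] /orP [] /andP [/eqP -> /eqP ->]; rewrite // esym.
    + move=> v _; rewrite deg_mod.
      * case: (eqVneq v x) => [->|vx].
          have -> : deg F' x = 0.
            rewrite /deg (_ : [set w | F' x w] = set0) ?cards0 //.
            by apply/setP => w; rewrite !inE (negbTE (nx w)).
          have -> : [set w | edge y z x w] = set0.
            by apply/setP => w; rewrite !inE /edge ?eqxx ?xy' ?xz' ?yz' ?zy' ?yx' ?zx' /= ?andbF ?orbF.
          have -> : [set w | edge x y x w || edge x z x w] = [set y; z].
            by apply/setP => w; rewrite !inE /edge ?eqxx ?xy' ?xz' ?yz' ?zy' ?yx' ?zx' /= ?andbF ?orbF.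
          by rewrite cards2 yz cards0.
        have vD : v \in D by rewrite !inE.
        case: (eqVneq v y) => [->|vy].
          have -> : [set w | edge y z y w] = [set z].
            by apply/setP => w; rewrite !inE /edge ?eqxx ?xy' ?xz' ?yz' ?zy' ?yx' ?zx' /= ?andbF ?orbF.
          have -> : [set w | edge x y y w || edge x z y w] = [set x].
            by apply/setP => w; rewrite !inE /edge ?eqxx ?xy' ?xz' ?yz' ?zy' ?yx' ?zx' /= ?andbF ?orbF.
          by rewrite !cards1 (F'deg y yD).
        case: (eqVneq v z) => [->|vz].
          have -> : [set w | edge y z z w] = [set y].
            by apply/setP => w; rewrite !inE /edge ?eqxx ?xy' ?xz' ?yz' ?zy' ?yx' ?zx' /= ?andbF ?orbF.
          have -> : [set w | edge x y z w || edge x z z w] = [set x].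
            by apply/setP => w; rewrite !inE /edge ?eqxx ?xy' ?xz' ?yz' ?zy' ?yx' ?zx' /= ?andbF ?orbF.
          by rewrite !cards1 (F'deg z zD).
        have -> : [set w | edge y z v w] = set0.
          by apply/setP => w; rewrite !inE /edge (negbTE vy) (negbTE vz).
        have -> : [set w | edge x y v w || edge x z v w] = set0.
          by apply/setP => w; rewrite !inE /edge (negbTE vy) (negbTE vz) (negbTE vx).
        by rewrite !cards0 (F'deg v vD).
      * by move=> w; rewrite /edge => /orP [] /andP [/eqP -> /eqP ->]; rewrite // F's.
      * move=> w /orP [] /orP [] /andP [/eqP -> /eqP ->]; by rewrite ?nx ?nx2.
  - move=> u v Fuv.
    case F2uv: (F2 u v); first exact: connect1.
    have cyz : connect F2 y z := connect_trans (connect1 F2yx) (connect1 F2xz).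
    move: F2uv; rewrite /F2 /modr Fuv /=; case R: (edge y z u v) => //= _.
    move: R; rewrite /edge => /orP [] /andP [/eqP -> /eqP ->] //.
    by rewrite (sym_connect_sym F2s).
  - by exists z.
have claim2 : forall a b, e x a -> e x b -> a != b -> ~~ e (s a) (s b).
  move=> a b exa exb ab; apply/negP => eab.
  have aD := nbD a exa; have bD := nbD b exb.
  set a' := s a; set b' := s b.
  have a'D : a' \in D := sD a aD.
  have b'D : b' \in D := sD b bD.
  have Fa : F' a a' := sF a aD.
  have Fb : F' b b' := sF b bD.
  have na' : ~~ e x a' := claim1 a exa.
  have nb' : ~~ e x b' := claim1 b exb.
  have xa : x != a by apply: contraTneq aD => <-.
  have xb : x != b by apply: contraTneq bD => <-.
  have xa' : x != a' by apply: contraTneq a'D => <-.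
  have xb' : x != b' by apply: contraTneq b'D => <-.
  have aa' : a != a' by apply: contraTneq Fa => <-; rewrite F'i.
  have bb' : b != b' by apply: contraTneq Fb => <-; rewrite F'i.
  have ab' : a != b' by apply: contraTneq exa => ->.
  have ba' : b != a' by apply: contraTneq exb => ->.
  have a'b' : a' != b' by apply/eqP => E; move/eqP: ab; apply; apply: (sinj a b aD bD E).
  have n_x_a : (x == a) = false by apply: negbTE.
  have n_a_x : (a == x) = false by rewrite eq_sym.
  have n_x_b : (x == b) = false by apply: negbTE.
  have n_b_x : (b == x) = false by rewrite eq_sym.
  have n_x_a1 : (x == a') = false by apply: negbTE.
  have n_a1_x : (a' == x) = false by rewrite eq_sym.
  have n_x_b1 : (x == b') = false by apply: negbTE.
  have n_b1_x : (b' == x) = false by rewrite eq_sym.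
  have n_a_b : (a == b) = false by apply: negbTE.
  have n_b_a : (b == a) = false by rewrite eq_sym.
  have n_a_a1 : (a == a') = false by apply: negbTE.
  have n_a1_a : (a' == a) = false by rewrite eq_sym.
  have n_b_b1 : (b == b') = false by apply: negbTE.
  have n_b1_b : (b' == b) = false by rewrite eq_sym.
  have n_a_b1 : (a == b') = false by apply: negbTE.
  have n_b1_a : (b' == a) = false by rewrite eq_sym.
  have n_b_a1 : (b == a') = false by apply: negbTE.
  have n_a1_b : (a' == b) = false by rewrite eq_sym.
  have n_a1_b1 : (a' == b') = false by apply: negbTE.
  have n_b1_a1 : (b' == a') = false by rewrite eq_sym.
  have na'b' : ~~ F' a' b'.
    apply/negP => /sall [E|E].
      by move: (sinj b a' bD a'D E) => /eqP; rewrite n_b_a1.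
    by move: (sinj a b' aD b'D E) => /eqP; rewrite n_a_b1.
  have nb'a' : ~~ F' b' a' by rewrite F's.
  pose F2 := modr F' (fun u v => edge a a' u v || edge b b' u v)
                     (fun u v => [|| edge x a u v, edge x b u v | edge a' b' u v]).
  have F2xa : F2 x a by rewrite /F2 /modr /edge !eqxx ?andbT ?orbT.
  have F2xb : F2 x b by rewrite /F2 /modr /edge !eqxx ?andbT ?orbT.
  have F2ab : F2 a' b' by rewrite /F2 /modr /edge !eqxx ?andbT ?orbT.
  have F2s : symmetric F2.
    apply: modr_sym => // u v; first by rewrite edge_sym (edge_sym b b').
    by rewrite edge_sym (edge_sym x b) (edge_sym a' b').
  apply: (contra F2).
  - split => //.
    + move=> u v H; rewrite !inE /=; move: H; rewrite /F2 /modr => /orP [/andP [/F'e /and3P [_ _ //] _]|].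
      by rewrite /edge => /or3P [] /orP [] /andP [/eqP -> /eqP ->]; rewrite // esym.
    + move=> v _; rewrite deg_mod.
      * case: (eqVneq v x) => [->|vx].
          have -> : deg F' x = 0.
            rewrite /deg (_ : [set w | F' x w] = set0) ?cards0 //.
            by apply/setP => w; rewrite !inE (negbTE (nx w)).
          have -> : [set w | edge a a' x w || edge b b' x w] = set0.
            by apply/setP => w; rewrite !inE /edge ?eqxx ?n_x_a ?n_a_x ?n_x_b ?n_b_x ?n_x_a1 ?n_a1_x ?n_x_b1 ?n_b1_x ?n_a_b ?n_b_a ?n_a_a1 ?n_a1_a ?n_b_b1 ?n_b1_b ?n_a_b1 ?n_b1_a ?n_b_a1 ?n_a1_b ?n_a1_b1 ?n_b1_a1 /= ?andbF ?orbF.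
          have -> : [set w | [|| edge x a x w, edge x b x w | edge a' b' x w]] = [set a; b].
            by apply/setP => w; rewrite !inE /edge ?eqxx ?n_x_a ?n_a_x ?n_x_b ?n_b_x ?n_x_a1 ?n_a1_x ?n_x_b1 ?n_b1_x ?n_a_b ?n_b_a ?n_a_a1 ?n_a1_a ?n_b_b1 ?n_b1_b ?n_a_b1 ?n_b1_a ?n_b_a1 ?n_a1_b ?n_a1_b1 ?n_b1_a1 /= ?andbF ?orbF.
          by rewrite cards2 ab cards0.
        have vD : v \in D by rewrite !inE.
        case: (eqVneq v a) => [->|va].
          have -> : [set w | edge a a' a w || edge b b' a w] = [set a'].
            by apply/setP => w; rewrite !inE /edge ?eqxx ?n_x_a ?n_a_x ?n_x_b ?n_b_x ?n_x_a1 ?n_a1_x ?n_x_b1 ?n_b1_x ?n_a_b ?n_b_a ?n_a_a1 ?n_a1_a ?n_b_b1 ?n_b1_b ?n_a_b1 ?n_b1_a ?n_b_a1 ?n_a1_b ?n_a1_b1 ?n_b1_a1 /= ?andbF ?orbF.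
          have -> : [set w | [|| edge x a a w, edge x b a w | edge a' b' a w]] = [set x].
            by apply/setP => w; rewrite !inE /edge ?eqxx ?n_x_a ?n_a_x ?n_x_b ?n_b_x ?n_x_a1 ?n_a1_x ?n_x_b1 ?n_b1_x ?n_a_b ?n_b_a ?n_a_a1 ?n_a1_a ?n_b_b1 ?n_b1_b ?n_a_b1 ?n_b1_a ?n_b_a1 ?n_a1_b ?n_a1_b1 ?n_b1_a1 /= ?andbF ?orbF.
          by rewrite !cards1 (F'deg a aD).
        case: (eqVneq v b) => [->|vb].
          have -> : [set w | edge a a' b w || edge b b' b w] = [set b'].
            by apply/setP => w; rewrite !inE /edge ?eqxx ?n_x_a ?n_a_x ?n_x_b ?n_b_x ?n_x_a1 ?n_a1_x ?n_x_b1 ?n_b1_x ?n_a_b ?n_b_a ?n_a_a1 ?n_a1_a ?n_b_b1 ?n_b1_b ?n_a_b1 ?n_b1_a ?n_b_a1 ?n_a1_b ?n_a1_b1 ?n_b1_a1 /= ?andbF ?orbF.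
          have -> : [set w | [|| edge x a b w, edge x b b w | edge a' b' b w]] = [set x].
            by apply/setP => w; rewrite !inE /edge ?eqxx ?n_x_a ?n_a_x ?n_x_b ?n_b_x ?n_x_a1 ?n_a1_x ?n_x_b1 ?n_b1_x ?n_a_b ?n_b_a ?n_a_a1 ?n_a1_a ?n_b_b1 ?n_b1_b ?n_a_b1 ?n_b1_a ?n_b_a1 ?n_a1_b ?n_a1_b1 ?n_b1_a1 /= ?andbF ?orbF.
          by rewrite !cards1 (F'deg b bD).
        case: (eqVneq v a') => [->|va'].
          have -> : [set w | edge a a' a' w || edge b b' a' w] = [set a].
            by apply/setP => w; rewrite !inE /edge ?eqxx ?n_x_a ?n_a_x ?n_x_b ?n_b_x ?n_x_a1 ?n_a1_x ?n_x_b1 ?n_b1_x ?n_a_b ?n_b_a ?n_a_a1 ?n_a1_a ?n_b_b1 ?n_b1_b ?n_a_b1 ?n_b1_a ?n_b_a1 ?n_a1_b ?n_a1_b1 ?n_b1_a1 /= ?andbF ?orbF.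
          have -> : [set w | [|| edge x a a' w, edge x b a' w | edge a' b' a' w]] = [set b'].
            by apply/setP => w; rewrite !inE /edge ?eqxx ?n_x_a ?n_a_x ?n_x_b ?n_b_x ?n_x_a1 ?n_a1_x ?n_x_b1 ?n_b1_x ?n_a_b ?n_b_a ?n_a_a1 ?n_a1_a ?n_b_b1 ?n_b1_b ?n_a_b1 ?n_b1_a ?n_b_a1 ?n_a1_b ?n_a1_b1 ?n_b1_a1 /= ?andbF ?orbF.
          by rewrite !cards1 (F'deg a' a'D).
        case: (eqVneq v b') => [->|vb'].
          have -> : [set w | edge a a' b' w || edge b b' b' w] = [set b].
            by apply/setP => w; rewrite !inE /edge ?eqxx ?n_x_a ?n_a_x ?n_x_b ?n_b_x ?n_x_a1 ?n_a1_x ?n_x_b1 ?n_b1_x ?n_a_b ?n_b_a ?n_a_a1 ?n_a1_a ?n_b_b1 ?n_b1_b ?n_a_b1 ?n_b1_a ?n_b_a1 ?n_a1_b ?n_a1_b1 ?n_b1_a1 /= ?andbF ?orbF.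
          have -> : [set w | [|| edge x a b' w, edge x b b' w | edge a' b' b' w]] = [set a'].
            by apply/setP => w; rewrite !inE /edge ?eqxx ?n_x_a ?n_a_x ?n_x_b ?n_b_x ?n_x_a1 ?n_a1_x ?n_x_b1 ?n_b1_x ?n_a_b ?n_b_a ?n_a_a1 ?n_a1_a ?n_b_b1 ?n_b1_b ?n_a_b1 ?n_b1_a ?n_b_a1 ?n_a1_b ?n_a1_b1 ?n_b1_a1 /= ?andbF ?orbF.
          by rewrite !cards1 (F'deg b' b'D).
        have -> : [set w | edge a a' v w || edge b b' v w] = set0.
          by apply/setP => w; rewrite !inE /edge (negbTE va) (negbTE vb) (negbTE va') (negbTE vb').
        have -> : [set w | [|| edge x a v w, edge x b v w | edge a' b' v w]] = set0.
          by apply/setP => w; rewrite !inE /edge (negbTE va) (negbTE vb) (negbTE va') (negbTE vb') (negbTE vx).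
        by rewrite !cards0 (F'deg v vD).
      * by move=> w; rewrite /edge => /orP [] /orP [] /andP [/eqP -> /eqP ->]; rewrite // F's.
      * by move=> w /or3P [] /orP [] /andP [/eqP -> /eqP ->]; rewrite ?nx ?nx2.
  - have ca' : connect F2 x a'.
      apply/negPn/negP => na'W.
      pose U := [set w in D | ~~ connect F2 x w].
      have sU : forall w, w \in U -> s w \in U.
        move=> w; rewrite inE => /andP [wD nw]; rewrite inE (sD w wD) /=.
        apply/negP => cw.
        have F2n : ~~ F2 w (s w).
          apply/negP => h; move/negP: nw; apply.
          by apply: (connect_trans cw); apply: connect1; rewrite F2s.
        move: F2n; rewrite /F2 /modr (sF w wD) /= negb_or => /andP [/negPn R _].
        move: R => /orP [] /orP [] /andP [/eqP Ew /eqP Esw].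
        + by move: nw; rewrite Ew (connect1 F2xa).
        + by move: Esw; rewrite Ew => /eqP; rewrite (negbTE (ss a aD)).
        + by move: nw; rewrite Ew (connect1 F2xb).
        + by move: Esw; rewrite Ew => /eqP; rewrite (negbTE (ss b bD)).
      have UD : {subset U <= D} by move=> w; rewrite inE => /andP [].
      have imU : s @: U = U.
        apply/eqP; rewrite eqEcard card_in_imset; last by move=> u v /UD uD /UD vD; apply: sinj.
        rewrite leqnn andbT; apply/subsetP => w /imsetP [u uU ->]; exact: sU.
      have a'U : a' \in U by rewrite inE a'D na'W.
      rewrite -imU in a'U; case/imsetP: a'U => u uU Eu.
      have Eau : a = u := sinj a u aD (UD u uU) Eu.
      by move: uU; rewrite inE -Eau (connect1 F2xa) andbF.
    have cb' : connect F2 x b' := connect_trans ca' (connect1 F2ab).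
    have cx : forall w, (w == a) || (w == a') || (w == b) || (w == b') -> connect F2 x w.
      by move=> w /orP [/orP [/orP []|]|] /eqP ->; rewrite ?(connect1 F2xa) ?(connect1 F2xb).
    move=> u v Fuv.
    case F2uv: (F2 u v); first exact: connect1.
    move: F2uv; rewrite /F2 /modr Fuv /=; case R: (edge a a' u v || edge b b' u v) => //= _.
    have [cu cv] : connect F2 x u /\ connect F2 x v.
      by move: R; rewrite /edge => /orP [] /orP [] /andP [/eqP -> /eqP ->]; split; apply: cx; rewrite !eqxx ?orbT.
    by apply: connect_trans cv; rewrite (sym_connect_sym F2s).
  - by exists a.
set N := [set y | e x y].
set S := x |: (s @: N).
have indS : independent e S.
  apply/forallP => u; apply/implyP => uS; apply/forallP => v; apply/implyP => vS.
  case/setU1P: uS => [->|/imsetP [y]]; case/setU1P: vS => [->|/imsetP [z]].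
  - by rewrite eirr.
  - by rewrite inE => zN ->; apply: claim1.
  - by rewrite inE => yN ->; rewrite esym; apply: claim1.
  - rewrite !inE => zN -> yN ->.
    case: (eqVneq y z) => [->|yz]; first by rewrite eirr.
    exact: claim2.
have cardS : #|S| = (deg e x).+1.
  rewrite cardsU1 card_in_imset; last by move=> u v; rewrite !inE => /nbD uD /nbD vD; apply: sinj.
  have -> : x \notin [set s y | y in N].
    apply/imsetP => [[y]]; rewrite inE => /nbD yD E.
    by move: (sD y yD); rewrite -E (negbTE xD).
  by [].
have := @leq_bigmax_cond _ (independent e) (fun S => #|S|) S indS.
rewrite -/(alpha e) cardS.
lia.
Qed.
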